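(* Let $Y=[0,1)$ with the topology whose open sets are exactly the sets $[0,\lambda)$ for $0\le\lambda\le1$, and let $L=\mathcal{O}(Y)$. Let $\mathfrak{I}=([0,1],\wedge,\vee,\neg,0,1)$ be regarded as a relational structure of type $(2,2,1,0,0)$. Then the type-2 fuzzy truth value algebra $\mathbb{M}$ is isomorphic to the convolution algebra $L^{\mathfrak{I}}$, and is isomorphic to the complex algebra $\hat{\mathfrak{I}}^+$ of the constant relational étalé $\hat{\mathfrak{I}}$ in the topos of étalé spaces over $Y$.
   Context: Let $\mathbb{I}=[0,1]$ with its usual order, $\wedge=\min$, $\vee=\max$, $\neg x=1-x$. The type-2 fuzzy truth value algebra is $\mathbb{M}=(\mathbb{I}^{\mathbb{I}},\sqcap,\sqcup,\neg,\underline{0},\underline{1})$ where, for $\alpha,\beta:\mathbb{I}\to\mathbb{I}$: $(\alpha\sqcap\beta)(x)=\bigvee\{\alpha(y)\wedge\beta(z)\mid y\wedge z=x\}$, $(\alpha\sqcup\beta)(x)=\bigvee\{\alpha(y)\wedge\beta(z)\mid y\vee z=x\}$, $(\neg\alpha)(x)=\bigvee\{\alpha(y)\mid \neg y=x\}$, $\underline{0}(x)=1$ if $x=0$ and $0$ otherwise, $\underline{1}(x)=1$ if $x=1$ and $0$ otherwise. As a relational structure, $\mathfrak{I}$ has ternary relations $\{(x,y,z)\mid x\wedge y=z\}$, $\{(x,y,z)\mid x\vee y=z\}$, binary relation $\{(x,y)\mid \neg x=y\}$, and unary relations $\{0\},\{1\}$. A relational structure $\mathfrak{X}=(X,(R_j)_J)$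 of type $\tau:J\to\mathbb{N}$, $j\mapsto n_j$, has $R_j\subseteq X^{n_j+1}$. For a complete lattice $L$, the convolution algebra $L^{\mathfrak{X}}$ has underlying set $L^X$ and operations $f_j(\alpha_1,\ldots,\alpha_{n_j})(x)=\bigvee\{\alpha_1(x_1)\wedge\cdots\wedge\alpha_{n_j}(x_{n_j})\mid (x_1,\ldots,x_{n_j},x)\in R_j\}$. An étalé space over $Y$ is a pair $(E,\pi)$ with $\pi:E\to Y$ a local homeomorphism; subobjects of $(E,\pi)$ correspond to open subsets of $E$. The constant étalé $\hat{X}$ is $X\times Y$ ($X$ discrete) with projection to $Y$; $\hat{X}^k$ is identified with $X^k\times Y$ and $\hat{R}=R\times Y$. The constant relational étalé is $\hat{\mathfrak{X}}=(\hat{X},(\hat{R}_j)_J)$, and its complex algebra $\hat{\mathfrak{X}}^+$ has underlying set the subobjects (open subsets) of $\hat{X}$ and operations given by étalé relational image: $(x,y)\in\hat{R}_j(A_1,\ldots,A_{n_j})$ iff there are $x_1,\ldots,x_{n_j}$ with $(x_1,\ldots,x_{n_j},x)\in R_j$ and $(x_i,y)\in A_i$ for all $i$. *)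

(* Defs.v *)
From mathcomp Require Import all_boot all_order all_algebra.
From mathcomp Require Import all_classical all_reals.
From mathcomp Require Import Rstruct.
Import Order.TTheory GRing.Theory Num.Theory.
Local Open Scope ring_scope.
Local Open Scope classical_set_scope.

Definition R : realType := Rdefinitions.R.

Definition I := {x : R | 0 <= x <= 1}.

Definition Rmeet (x y z : I) : Prop := Num.min (sval x) (sval y) = sval z.
Definition Rjoin (x y z : I) : Prop := Num.max (sval x) (sval y) = sval z.
Definition Rneg (x y : I) : Prop := 1 - sval x = sval y.
Definition Rzero (x : I) : Prop := sval x = 0.
Definition Rone (x : I) : Prop := sval x = 1.

Definition Yset : set R := [set y | 0 <= y < 1].
Definition openY (U : set R) : Prop :=
  exists l : R, 0 <= l <= 1 /\ U = [set y | 0 <= y < l].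

(* Algebras of type (2,2,1,0,0), presented as an ambient type together with
   a predicate carving out the carrier. *)
Record alg := Alg {
  car : Type;
  mem : car -> Prop;
  op_meet : car -> car -> car;
  op_join : car -> car -> car;
  op_neg : car -> car;
  op_zero : car;
  op_one : car }.

Definition alg_iso (A B : alg) : Prop :=
  exists f : car A -> car B,
    (forall a, mem A a -> mem B (f a)) /\
    (forall a b, mem A a -> mem A b -> f a = f b -> a = b) /\
    (forall b, mem B b -> exists a, mem A a /\ f a = b) /\
    (forall a b, mem A a -> mem A b -> f (op_meet A a b) = op_meet B (f a) (f b)) /\
    (forall a b, mem A a -> mem A b -> f (op_join A a b) = op_join B (f a) (f b)) /\
    (forall a, mem A a -> f (op_neg A a) = op_neg B (f a)) /\
    f (op_zero A) = op_zero B /\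
    f (op_one A) = op_one B.

Definition Mcar := I -> R.
Definition Mmem (a : Mcar) : Prop := forall x, 0 <= a x <= 1.
Definition Mmeet (a b : Mcar) : Mcar := fun x =>
  sup [set r | exists y z : I, Num.min (sval y) (sval z) = sval x /\
                                r = Num.min (a y) (b z)].
Definition Mjoin (a b : Mcar) : Mcar := fun x =>
  sup [set r | exists y z : I, Num.max (sval y) (sval z) = sval x /\
                                r = Num.min (a y) (b z)].
Definition Mneg (a : Mcar) : Mcar := fun x =>
  sup [set r | exists y : I, 1 - sval y = sval x /\ r = a y].
Definition Mzero : Mcar := fun x => if sval x == 0 then 1 else 0.
Definition Mone : Mcar := fun x => if sval x == 1 then 1 else 0.

Definition Malg : alg := @Alg Mcar Mmem Mmeet Mjoin Mneg Mzero Mone.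

(* ---------- The convolution algebra L^I, L = O(Y) ----------
   Elements of L are subsets of R that are open in Y; joins in L are unions
   (O(Y) is closed under arbitrary unions), finite meets are intersections,
   the empty meet is the top element Y. *)
Definition Lcar := I -> set R.
Definition Lmem (a : Lcar) : Prop := forall x, openY (a x).
Definition conv2 (Rel : I -> I -> I -> Prop) (a b : Lcar) : Lcar := fun x =>
  [set t | exists y z : I, Rel y z x /\ a y t /\ b z t].
Definition conv1 (Rel : I -> I -> Prop) (a : Lcar) : Lcar := fun x =>
  [set t | exists y : I, Rel y x /\ a y t].
Definition conv0 (Rel : I -> Prop) : Lcar := fun x =>
  [set t | Rel x /\ Yset t].

Definition LIalg : alg :=
  @Alg Lcar Lmem (conv2 Rmeet) (conv2 Rjoin) (conv1 Rneg) (conv0 Rzero) (conv0 Rone).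

(* ---------- The complex algebra of the constant relational etale ----------
   hat I = I x Y with I discrete; its subobjects are its open subsets, i.e.
   the subsets of I x Y all of whose fibres {y | (x,y) in A} are open in Y. *)
Definition Ccar := set (I * R).
Definition Cmem (A : Ccar) : Prop :=
  (forall p, A p -> Yset p.2) /\ (forall x, openY [set y | A (x, y)]).
Definition img2 (Rel : I -> I -> I -> Prop) (A B : Ccar) : Ccar :=
  [set p | exists y z : I, Rel y z p.1 /\ A (y, p.2) /\ B (z, p.2)].
Definition img1 (Rel : I -> I -> Prop) (A : Ccar) : Ccar :=
  [set p | exists y : I, Rel y p.1 /\ A (y, p.2)].
Definition img0 (Rel : I -> Prop) : Ccar :=
  [set p | Rel p.1 /\ Yset p.2].

Definition Calg : alg :=
  @Alg Ccar Cmem (img2 Rmeet) (img2 Rjoin) (img1 Rneg) (img0 Rzero) (img0 Rone).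

(* Main.v *)
Require Import Defs.
From mathcomp Require Import all_boot all_order all_algebra.
From mathcomp Require Import all_classical all_reals.
From mathcomp Require Import Rstruct lra.
Import Order.TTheory GRing.Theory Num.Theory.
Local Open Scope ring_scope.
Local Open Scope classical_set_scope.

Definition F (a : Mcar) : Lcar := fun x => [set t | 0 <= t < a x].
Definition G (a : Mcar) : Ccar := [set p | 0 <= p.2 < a p.1].

Lemma sup_key (S : set R) (t : R) : S !=set0 -> (forall r, S r -> r <= 1) ->
  (t < sup S <-> exists r, S r /\ t < r).
Proof.
move=> S0 Sb; split.
  by move=> /(sup_gt S0) [r Sr tr]; exists r.
move=> [r [Sr tr]]; apply: (lt_le_trans tr); apply: ub_le_sup => //.
by exists 1 => z /Sb.
Qed.

Lemma sup_01 (S : set R) : S !=set0 -> (forall r, S r -> 0 <= r <= 1) ->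
  0 <= sup S <= 1.
Proof.
move=> [r0 Sr0] Sb; apply/andP; split.
  have /andP[h _] := Sb _ Sr0; apply: (le_trans h); apply: ub_le_sup => //.
  by exists 1 => z /Sb /andP[].
by apply: ge_sup; [exists r0 | move=> z /Sb /andP[]].
Qed.

Lemma seteq_open (a b : R) : 0 <= a -> 0 <= b ->
  [set t | 0 <= t < a] = [set t | 0 <= t < b] -> a = b.
Proof.
move=> a0 b0 e; case: (ltgtP a b) => // h.
  have : [set t | 0 <= t < b] a by rewrite /= a0 h.
  by rewrite -e /= ltxx andbF.
have : [set t | 0 <= t < a] b by rewrite /= b0 h.
by rewrite e /= ltxx andbF.
Qed.

Lemma pext (P Q : Prop) : (P <-> Q) -> P = Q.
Proof. by move=> [h1 h2]; apply: propext; split. Qed.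

Section Ops.
Variables a b : Mcar.
Hypotheses (ha : Mmem a) (hb : Mmem b).

Lemma meet_mem : Mmem (Mmeet a b).
Proof.
move=> x; apply: sup_01; first by exists (Num.min (a x) (b x)), x, x; rewrite minxx.
move=> r [y [z [_ ->]]]; have /andP[h1 h2] := ha y; have /andP[h3 h4] := hb z.
by rewrite le_min ge_min h1 h2 h3.
Qed.

Lemma join_mem : Mmem (Mjoin a b).
Proof.
move=> x; apply: sup_01; first by exists (Num.min (a x) (b x)), x, x; rewrite maxxx.
move=> r [y [z [_ ->]]]; have /andP[h1 h2] := ha y; have /andP[h3 h4] := hb z.
by rewrite le_min ge_min h1 h2 h3.
Qed.

Lemma meetF : F (Mmeet a b) = conv2 Rmeet (F a) (F b).
Proof.
apply: funext => x; apply: funext => t; apply: pext.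
rewrite /F /Mmeet /conv2 /Rmeet /=.
have S0 : [set r | exists y z : I, Num.min (sval y) (sval z) = sval x /\
                                r = Num.min (a y) (b z)] !=set0.
  by exists (Num.min (a x) (b x)), x, x; rewrite minxx.
have Sb : forall r, [set r | exists y z : I, Num.min (sval y) (sval z) = sval x /\
                                r = Num.min (a y) (b z)] r -> r <= 1.
  move=> r [y [z [_ ->]]]; have /andP[? ?] := ha y.
  by rewrite ge_min; apply/orP; left.
split.
  move=> /andP[t0 /(sup_key _ _ S0 Sb)] [r [[y [z [e ->]]]]].
  by rewrite lt_min => /andP[h1 h2]; exists y, z; rewrite t0 h1 h2.
move=> [y [z [e [/andP[t0 h1] /andP[_ h2]]]]]; rewrite t0 /=.
apply/(sup_key _ _ S0 Sb); exists (Num.min (a y) (b z)); split.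
  by exists y, z.
by rewrite lt_min h1 h2.
Qed.

Lemma joinF : F (Mjoin a b) = conv2 Rjoin (F a) (F b).
Proof.
apply: funext => x; apply: funext => t; apply: pext.
rewrite /F /Mjoin /conv2 /Rjoin /=.
have S0 : [set r | exists y z : I, Num.max (sval y) (sval z) = sval x /\
                                r = Num.min (a y) (b z)] !=set0.
  by exists (Num.min (a x) (b x)), x, x; rewrite maxxx.
have Sb : forall r, [set r | exists y z : I, Num.max (sval y) (sval z) = sval x /\
                                r = Num.min (a y) (b z)] r -> r <= 1.
  move=> r [y [z [_ ->]]]; have /andP[? ?] := ha y.
  by rewrite ge_min; apply/orP; left.
split.
  move=> /andP[t0 /(sup_key _ _ S0 Sb)] [r [[y [z [e ->]]]]].
  by rewrite lt_min => /andP[h1 h2]; exists y, z; rewrite t0 h1 h2.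
move=> [y [z [e [/andP[t0 h1] /andP[_ h2]]]]]; rewrite t0 /=.
apply/(sup_key _ _ S0 Sb); exists (Num.min (a y) (b z)); split.
  by exists y, z.
by rewrite lt_min h1 h2.
Qed.

Lemma negI (x : I) : exists y : I, 1 - sval y = sval x.
Proof.
case: x => v hv; have /andP[v0 v1] := hv.
have h : 0 <= 1 - v <= 1 by apply/andP; split; lra.
by exists (exist _ (1 - v) h) => /=; lra.
Qed.

Lemma neg_mem : Mmem (Mneg a).
Proof.
move=> x; apply: sup_01; first by have [y e] := negI x; exists (a y), y.
by move=> r [y [_ ->]].
Qed.

Lemma negF : F (Mneg a) = conv1 Rneg (F a).
Proof.
apply: funext => x; apply: funext => t; apply: pext.
rewrite /F /Mneg /conv1 /Rneg /=.
have S0 : [set r | exists y : I, 1 - sval y = sval x /\ r = a y] !=set0.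
  by have [y e] := negI x; exists (a y), y.
have Sb : forall r, [set r | exists y : I, 1 - sval y = sval x /\ r = a y] r -> r <= 1.
  by move=> r [y [_ ->]]; have /andP[? ?] := ha y.
split.
  move=> /andP[t0 /(sup_key _ _ S0 Sb)] [r [[y [e ->]]]] h.
  by exists y; rewrite t0 h.
move=> [y [e /andP[t0 h1]]]; rewrite t0 /=.
by apply/(sup_key _ _ S0 Sb); exists (a y); split => //; exists y.
Qed.
End Ops.

Lemma zero_mem : Mmem Mzero.
Proof. by move=> x; rewrite /Mzero; case: eqP => _; rewrite lexx ?ler01. Qed.
Lemma one_mem : Mmem Mone.
Proof. by move=> x; rewrite /Mone; case: eqP => _; rewrite lexx ?ler01. Qed.

Lemma zeroF : F Mzero = conv0 Rzero.
Proof.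
apply: funext => x; apply: funext => t; apply: pext.
rewrite /F /Mzero /conv0 /Rzero /Yset /=; case: eqP => h; split => //.
- by case.
- by move=> /andP[h1 h2]; have := le_lt_trans h1 h2; rewrite ltxx.
- by case.
Qed.

Lemma oneF : F Mone = conv0 Rone.
Proof.
apply: funext => x; apply: funext => t; apply: pext.
rewrite /F /Mone /conv0 /Rone /Yset /=; case: eqP => h; split => //.
- by case.
- by move=> /andP[h1 h2]; have := le_lt_trans h1 h2; rewrite ltxx.
- by case.
Qed.

Lemma F_mem a : Mmem a -> Lmem (F a).
Proof. by move=> ha x; exists (a x); split => //; apply: ha. Qed.

Lemma F_inj a b : Mmem a -> Mmem b -> F a = F b -> a = b.
Proof.
move=> ha hb e; apply: funext => x; apply: seteq_open.
- by have /andP[] := ha x.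
- by have /andP[] := hb x.
- exact: (f_equal (fun g => g x) e).
Qed.

Lemma F_surj c : Lmem c -> exists a, Mmem a /\ F a = c.
Proof.
move=> hc; exists (fun x => proj1_sig (cid (hc x))); split.
  by move=> x; case: (cid (hc x)) => l [].
apply: funext => x; rewrite /F; case: (cid (hc x)) => l [_ e] /=.
by rewrite e.
Qed.

Lemma GF a : G a = fun p => F a p.1 p.2.
Proof. by []. Qed.

Theorem corollary2 : alg_iso Malg LIalg /\ alg_iso Malg Calg.
Proof.
split.
  exists F; split; first exact: F_mem.
  split; first exact: F_inj.
  split; first exact: F_surj.
  split; first by move=> a b ha hb; exact: meetF.
  split; first by move=> a b ha hb; exact: joinF.
  split; first by move=> a ha; exact: negF.
  by split; [exact: zeroF | exact: oneF].
exists G; split.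
  move=> a ha; split.
    case=> x y /= /andP[y0 ya]; rewrite /Yset /= y0 /=.
    by apply: (lt_le_trans ya); have /andP[] := ha x.
  by move=> x; exists (a x); split => //; apply: ha.
split.
  move=> a b ha hb e; apply: F_inj => //.
  apply: funext => x; apply: funext => t.
  exact: (f_equal (fun A : Ccar => A (x, t)) e).
split.
  move=> A [hA1 hA2].
  have [a [ha e]] := @F_surj (fun x => [set y | A (x, y)]) hA2.
  exists a; split => //; apply: funext => -[x y].
  exact: (f_equal (fun g : Lcar => g x y) e).
split; first by move=> a b ha hb /=; rewrite !GF meetF.
split; first by move=> a b ha hb /=; rewrite !GF joinF.
split; first by move=> a ha /=; rewrite !GF negF.
by split => /=; rewrite GF ?zeroF ?oneF.
Qed.
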